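(* Let $0<p<1/2$ and let $\mathcal E_p$ be the qubit channel mapping every input state $\varrho$ to the fixed state $\xi_p=p|0\rangle\langle 0|+(1-p)|1\rangle\langle 1|$. Then the boundariness of $\mathcal E_p$ in the convex set of qubit channels is $b(\mathcal E_p)=p(1-p)$, and this is strictly larger than the minimal eigenvalue $\lambda_{\min}=p/2$ of the Choi–Jamiolkowski operator $E_p=\xi_p\otimes\tfrac12 I$ of $\mathcal E_p$.
   Context: A qubit channel is a completely positive trace-preserving linear map on $2\times 2$ complex matrices; the set of qubit channels is convex. The Choi–Jamiolkowski operator of a channel $\mathcal E$ is $E=(\mathcal E\otimes\mathcal I)(|\psi_+\rangle\langle\psi_+|)$ with $|\psi_+\rangle=\frac1{\sqrt2}(|00\rangle+|11\rangle)$. For a convex set $Z$ and $x,y\in Z$, the weight function is $t_y(x)=\sup\{0\leq t<1 : \frac{y-tx}{1-t}\in Z\}$, and the boundariness of $y$ is $b(y)=\inf_{x\in Z}t_y(x)$. *)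

(* Defs.v *)
From HB Require Import structures.
From mathcomp Require Import all_boot all_order all_algebra.
From mathcomp Require Import boolp classical_sets reals.
From mathcomp Require Import complex mxtens.

Set Implicit Arguments.
Unset Strict Implicit.
Unset Printing Implicit Defensive.

Import Order.TTheory GRing.Theory Num.Theory.
Local Open Scope ring_scope.
Local Open Scope classical_set_scope.

Section Qubit.
Variable R : realType.
Local Notation C := (R[i]).

Definition rC (x : R) : C := Complex x 0.

Definition adjmx {m n} (A : 'M[C]_(m, n)) : 'M[C]_(n, m) :=
  (map_mx Num.conj A)^T.

Definition psd {n} (A : 'M[C]_n) : Prop :=
  forall v : 'cV[C]_n, 0 <= (adjmx v *m A *m v) 0 0.

(* (E ⊗ id_k) acting on operators on C^2 ⊗ C^k (system first, via mxtens) *)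
Definition ampl (E : 'M[C]_2 -> 'M[C]_2) (k : nat) (X : 'M[C]_(2 * k))
  : 'M[C]_(2 * k) :=
  \matrix_(r, s)
    E (\matrix_(a, b) X (mxtens_index (a, (mxtens_unindex r).2))
                        (mxtens_index (b, (mxtens_unindex s).2)))
      (mxtens_unindex r).1 (mxtens_unindex s).1.

Definition is_linear_map (E : 'M[C]_2 -> 'M[C]_2) : Prop :=
  forall (c : C) (A B : 'M[C]_2), E (c *: A + B) = c *: E A + E B.

Definition completely_positive (E : 'M[C]_2 -> 'M[C]_2) : Prop :=
  forall (k : nat) (X : 'M[C]_(2 * k)), psd X -> psd (ampl E X).

Definition trace_preserving (E : 'M[C]_2 -> 'M[C]_2) : Prop :=
  forall A : 'M[C]_2, \tr (E A) = \tr A.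

Definition qubit_channel : set ('M[C]_2 -> 'M[C]_2) :=
  [set E | is_linear_map E /\ completely_positive E /\ trace_preserving E].

Definition affcomb (t : R) (y x : 'M[C]_2 -> 'M[C]_2) : 'M[C]_2 -> 'M[C]_2 :=
  fun A => rC ((1 - t)^-1) *: (y A - rC t *: x A).

Definition weight (Z : set ('M[C]_2 -> 'M[C]_2)) (y x : 'M[C]_2 -> 'M[C]_2) : R :=
  sup [set t : R | 0 <= t < 1 /\ Z (affcomb t y x)].

Definition boundariness (Z : set ('M[C]_2 -> 'M[C]_2)) (y : 'M[C]_2 -> 'M[C]_2) : R :=
  inf [set weight Z y x | x in Z].

(* Choi-Jamiolkowski operator (E ⊗ I)(|psi+><psi+|),
   |psi+><psi+| = 1/2 sum_{i,j} |i><j| ⊗ |i><j| *)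
Definition choi (E : 'M[C]_2 -> 'M[C]_2) : 'M[C]_(2 * 2) :=
  \sum_(i < 2) \sum_(j < 2) rC (1 / 2) *: (E (delta_mx i j) *t delta_mx i j).

Definition xi (p : R) : 'M[C]_2 :=
  rC p *: delta_mx 0 0 + rC (1 - p) *: delta_mx 1 1.

Definition Ep (p : R) : 'M[C]_2 -> 'M[C]_2 := fun rho => \tr rho *: xi p.

End Qubit.

(* Main.v *)
Require Import Defs.
From HB Require Import structures.
From mathcomp Require Import all_boot all_order all_algebra.
From mathcomp Require Import boolp classical_sets reals.
From mathcomp Require Import complex mxtens.
From mathcomp Require Import ring lra.

Import Order.TTheory GRing.Theory Num.Theory.
Local Open Scope ring_scope.

Set Implicit Arguments.
Unset Strict Implicit.
Unset Printing Implicit Defensive.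

Section Aux.
Local Open Scope complex_scope.
Local Open Scope ring_scope.
Variable R : realType.
Local Notation C := (R[i]).

Lemma rCE (x : R) : rC x = x%:C. Proof. by []. Qed.

Lemma rC_real (x : R) : rC x \is Num.real.
Proof.
rewrite realE rCE -[0 : C]/((0:R)%:C) !lecR; exact: le_total.
Qed.

Lemma conj_rC (x : R) : Num.conj (rC x) = rC x.
Proof. exact: conj_Creal (rC_real x). Qed.

Lemma rC_ge0 (x : R) : (0 <= rC x) = (0 <= x).
Proof. by rewrite rCE ler0c. Qed.

Definition rCm := (rmorphB, rmorphD, rmorphM, rmorph1, rmorph0, rmorphN).

Lemma sum_I2 (F : 'I_2 -> C) : \sum_(a < 2) F a = F 0 + F 1.
Proof. by rewrite big_ord_recl big_ord1; congr (_ + F _); apply: val_inj. Qed.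

Lemma sum2k k (F : 'I_(2 * k) -> C) :
  \sum_(r < 2 * k) F r = \sum_(a < 2) \sum_(i < k) F (mxtens_index (a, i)).
Proof.
rewrite pair_big /=.
rewrite (reindex (@mxtens_index 2 k)) /=; first by apply: eq_bigr => -[a i].
by exists (@mxtens_unindex 2 k) => r _; rewrite (mxtens_indexK, mxtens_unindexK).
Qed.

Definition bil {n} (M : 'M[C]_n) (U W : 'cV[C]_n) : C := (adjmx U *m M *m W) 0 0.

Lemma bilE n (M : 'M[C]_n) U W :
  bil M U W = \sum_r \sum_s Num.conj (U r 0) * M r s * W s 0.
Proof.
rewrite /bil mxE exchange_big /=; apply: eq_bigr => s _.
rewrite mxE big_distrl /=; apply: eq_bigr => r _.
by rewrite !mxE.
Qed.

Lemma adjmx_lin n (a b : R) (U1 U2 : 'cV[C]_n) :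
  adjmx (rC a *: U1 + rC b *: U2) = rC a *: adjmx U1 + rC b *: adjmx U2.
Proof.
by apply/matrixP => i j; rewrite !mxE rmorphD !rmorphM /= !conj_rC.
Qed.

Lemma bil_linl n (M : 'M[C]_n) (a b : R) U1 U2 W :
  bil M (rC a *: U1 + rC b *: U2) W = rC a * bil M U1 W + rC b * bil M U2 W.
Proof.
by rewrite /bil adjmx_lin !mulmxDl -!scalemxAl !mxE.
Qed.

Lemma bil_linr n (M : 'M[C]_n) (c d : C) U W1 W2 :
  bil M U (c *: W1 + d *: W2) = c * bil M U W1 + d * bil M U W2.
Proof.
by rewrite /bil !mulmxDr -!scalemxAr !mxE.
Qed.


Lemma ord2P (a : 'I_2) : a = 0 \/ a = 1.
Proof. by case: a => -[|[|//]] H; [left|right]; apply: val_inj. Qed.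

Definition emb {k} (a : 'I_2) (u : 'cV[C]_k) : 'cV[C]_(2 * k) :=
  \col_r (if (@mxtens_unindex 2 k r).1 == a then u (mxtens_unindex r).2 0 else 0).

Definition comp {k} (a : 'I_2) (v : 'cV[C]_(2 * k)) : 'cV[C]_k :=
  \col_i v (mxtens_index (a, i)) 0.

Definition ptr {k} (M : 'M[C]_(2 * k)) : 'M[C]_k :=
  \matrix_(i, j) \sum_(a < 2) M (mxtens_index (a, i)) (mxtens_index (a, j)).

Lemma adjmxD n (U W : 'cV[C]_n) : adjmx (U + W) = adjmx U + adjmx W.
Proof. by apply/matrixP => i j; rewrite !mxE rmorphD. Qed.

Lemma bil_addl n (M : 'M[C]_n) U1 U2 W :
  bil M (U1 + U2) W = bil M U1 W + bil M U2 W.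
Proof. by rewrite /bil adjmxD !mulmxDl !mxE. Qed.

Lemma bil_addr n (M : 'M[C]_n) U W1 W2 :
  bil M U (W1 + W2) = bil M U W1 + bil M U W2.
Proof. by rewrite /bil !mulmxDr !mxE. Qed.

Lemma bil_emb k (M : 'M[C]_(2 * k)) a b u w :
  bil M (emb a u) (emb b w) =
  \sum_i \sum_j Num.conj (u i 0) * M (mxtens_index (a, i)) (mxtens_index (b, j)) * w j 0.
Proof.
rewrite bilE sum2k (bigD1 a) //= [X in _ + X]big1 ?addr0; last first.
  move=> c ca; apply: big1 => i _; apply: big1 => s _.
  by rewrite mxE mxtens_indexK /= (negbTE ca) rmorph0 !mul0r.
apply: eq_bigr => i _; rewrite sum2k (bigD1 b) //= [X in _ + X]big1 ?addr0; last first.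
  move=> c cb; apply: big1 => j _.
  by rewrite [emb b w _ _]mxE mxtens_indexK /= (negbTE cb) mulr0.
by apply: eq_bigr => j _; rewrite !mxE !mxtens_indexK /= !eqxx.
Qed.

Lemma ptr_bil k (M : 'M[C]_(2 * k)) u w :
  bil (ptr M) u w = bil M (emb 0 u) (emb 0 w) + bil M (emb 1 u) (emb 1 w).
Proof.
rewrite bilE !bil_emb -big_split /=; apply: eq_bigr => i _.
rewrite -big_split /=; apply: eq_bigr => j _.
by rewrite [ptr M i j]mxE sum_I2 mulrDr mulrDl.
Qed.

Lemma emb_comp k (v : 'cV[C]_(2 * k)) : v = emb 0 (comp 0 v) + emb 1 (comp 1 v).
Proof.
apply/matrixP => r j; rewrite !mxE (ord1 j).
case: (mxtens_indexP r) => a i; rewrite !mxtens_indexK /=.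
by case: (ord2P a) => ->; rewrite /= ?addr0 ?add0r.
Qed.


Definition blk {k} (X : 'M[C]_(2 * k)) (i j : 'I_k) : 'M[C]_2 :=
  \matrix_(a, b) X (mxtens_index (a, i)) (mxtens_index (b, j)).

Lemma ampl_entry (E : 'M[C]_2 -> 'M[C]_2) k (X : 'M[C]_(2 * k)) a i b j :
  ampl E X (mxtens_index (a, i)) (mxtens_index (b, j)) = E (blk X i j) a b.
Proof. by rewrite /ampl mxE !mxtens_indexK. Qed.

Lemma ptr_ampl (E : 'M[C]_2 -> 'M[C]_2) k (X : 'M[C]_(2 * k)) :
  trace_preserving E -> ptr (ampl E X) = ptr X.
Proof.
move=> TP; apply/matrixP => i j; rewrite [LHS]mxE [RHS]mxE.
transitivity (\tr (E (blk X i j))).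
  by rewrite /mxtrace; apply: eq_bigr => a _; rewrite ampl_entry.
by rewrite TP /mxtrace; apply: eq_bigr => a _; rewrite mxE.
Qed.

Lemma ampl_Ep_entry (p : R) k (X : 'M[C]_(2 * k)) a i b j :
  ampl (Ep p) X (mxtens_index (a, i)) (mxtens_index (b, j)) = ptr X i j * xi p a b.
Proof.
rewrite ampl_entry /Ep mxE; congr (_ * _).
by rewrite /mxtrace mxE; apply: eq_bigr => c _; rewrite mxE.
Qed.

Lemma xiE (p : R) : [/\ xi p 0 0 = rC p, xi p 0 1 = 0, xi p 1 0 = 0 & xi p 1 1 = rC (1 - p)].
Proof. by rewrite /xi !mxE /= !mulr1 !mulr0 !addr0 add0r. Qed.

Lemma bil_Ep_emb (p : R) k (X : 'M[C]_(2 * k)) a b u w :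
  bil (ampl (Ep p) X) (emb a u) (emb b w) = xi p a b * bil (ptr X) u w.
Proof.
rewrite bil_emb bilE big_distrr; apply: eq_bigr => i _.
rewrite big_distrr; apply: eq_bigr => j _.
rewrite ampl_Ep_entry /=; ring.
Qed.

Lemma bil_Ep (p : R) k (X : 'M[C]_(2 * k)) v :
  bil (ampl (Ep p) X) v v = rC p * bil (ptr X) (comp 0 v) (comp 0 v)
                          + rC (1 - p) * bil (ptr X) (comp 1 v) (comp 1 v).
Proof.
have [e00 e01 e10 e11] := xiE p.
by rewrite {1 2}[v]emb_comp !bil_addl !bil_addr !bil_Ep_emb e00 e01 e10 e11 !mul0r addr0 add0r.
Qed.

Lemma ampl_aff t (y x : 'M[C]_2 -> 'M[C]_2) k (X : 'M[C]_(2 * k)) :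
  ampl (affcomb t y x) X = rC ((1 - t)^-1) *: (ampl y X - rC t *: ampl x X).
Proof. by apply/matrixP => r s; rewrite !mxE. Qed.

Lemma bil_scal n (A B : 'M[C]_n) (c d : C) v :
  bil (c *: (A - d *: B)) v v = c * (bil A v v - d * bil B v v).
Proof.
by rewrite /bil -scalemxAr mulmxBr -scalemxAr -scalemxAl mulmxBl -scalemxAl !mxE.
Qed.

Lemma key_id n (M : 'M[C]_n) (p : R) V0 V1 :
  rC (p * (1 - p)) * bil M (V0 + V1) (V0 + V1)
  + bil M (rC p *: V0 + rC (- (1 - p)) *: V1) (rC p *: V0 + rC (- (1 - p)) *: V1)
  = rC p * bil M V0 V0 + rC (1 - p) * bil M V1 V1.
Proof.
rewrite !bil_linl !bil_linr !bil_addl !bil_addr !rCE !rCm; ring.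
Qed.


Lemma aff_cp (p t : R) x : qubit_channel x -> 0 <= p -> p <= 1 -> 0 <= t ->
  t <= p * (1 - p) -> t < 1 -> completely_positive (affcomb t (Ep p) x).
Proof.
move=> [_ [CPx TPx]] p0 p1 t0 tpq t1 k X HX v.
change (0 <= bil (ampl (affcomb t (Ep p) x) X) v v).
rewrite ampl_aff bil_scal.
apply: mulr_ge0; first by rewrite rC_ge0 invr_ge0 subr_ge0 ltW.
have HM := CPx k X HX; set M := ampl x X in HM *.
rewrite bil_Ep -(ptr_ampl X TPx) -/M !ptr_bil.
set v0 := comp 0 v; set v1 := comp 1 v.
have -> : bil M v v = bil M (emb 0 v0 + emb 1 v1) (emb 0 v0 + emb 1 v1) by rewrite -emb_comp.
have K := key_id M p (emb 0 v0) (emb 1 v1).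
set Q := bil M (_ + _) (_ + _) in K *.
set W := bil M (rC p *: _ + _) _ in K.
set F0 := bil M (emb 0 v0) (emb 0 v0) in K *.
set F1 := bil M (emb 1 v1) (emb 1 v1) in K *.
set A := bil M (emb 1 v0) (emb 1 v0).
set B := bil M (emb 0 v1) (emb 0 v1).
have -> : rC p * (F0 + A) + rC (1 - p) * (B + F1) - rC t * Q =
          rC (p * (1 - p) - t) * Q + rC p * A + rC (1 - p) * B + W.
  have eW : W = rC p * F0 + rC (1 - p) * F1 - rC (p * (1 - p)) * Q.
    by rewrite -K addrAC subrr add0r.
  rewrite eW !rCE !rCm; ring.
rewrite !addr_ge0 ?mulr_ge0 ?rC_ge0 ?subr_ge0 //; exact: HM.
Qed.


Definition ip {n} (U W : 'cV[C]_n) : C := (adjmx U *m W) 0 0.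

Lemma ip_linl n (a b : R) (U1 U2 W : 'cV[C]_n) :
  ip (rC a *: U1 + rC b *: U2) W = rC a * ip U1 W + rC b * ip U2 W.
Proof. by rewrite /ip adjmx_lin mulmxDl -!scalemxAl !mxE. Qed.

Lemma ip_addr n (U W1 W2 : 'cV[C]_n) : ip U (W1 + W2) = ip U W1 + ip U W2.
Proof. by rewrite /ip mulmxDr mxE. Qed.

Lemma ip_emb k a b (u w : 'cV[C]_k) :
  ip (emb a u) (emb b w) = if a == b then ip u w else 0.
Proof.
rewrite /ip !mxE sum2k (bigD1 a) //= [X in _ + X]big1 ?addr0 => [|c ca]; last first.
  by apply: big1 => i _; rewrite !mxE mxtens_indexK /= (negbTE ca) rmorph0 mul0r.
case: eqVneq => [<-|ab].
  by apply: eq_bigr => i _; rewrite !mxE mxtens_indexK /= !eqxx.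
by apply: big1 => i _; rewrite !mxE mxtens_indexK /= (negbTE ab) mulr0.
Qed.

Definition e (a : 'I_2) : 'cV[C]_2 := delta_mx a 0.

Lemma ip_e a b : ip (e a) (e b) = (a == b)%:R.
Proof.
rewrite /ip mxE sum_I2 !mxE.
by case: (ord2P a) => ->; case: (ord2P b) => ->; rewrite /= ?rmorph1 ?rmorph0 ?mulr1 ?mulr0 ?addr0 ?add0r.
Qed.

Definition Om : 'cV[C]_(2 * 2) := emb 0 (e 0) + emb 1 (e 1).

Lemma ipO a c : ip (emb a (e c)) Om = (a == c)%:R.
Proof.
rewrite /Om ip_addr !ip_emb !ip_e.
by case: (ord2P a) => ->; case: (ord2P c) => ->; rewrite /= ?addr0 ?add0r.
Qed.

Lemma bil_rank1 n (Om' U : 'cV[C]_n) :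
  bil (Om' *m adjmx Om') U U = ip U Om' * Num.conj (ip U Om').
Proof.
rewrite /bil /ip; have -> : adjmx U *m (Om' *m adjmx Om') *m U = (adjmx U *m Om') *m (adjmx Om' *m U) by rewrite !mulmxA.
rewrite [LHS]mxE big_ord1; congr (_ * _).
rewrite !mxE rmorph_sum; apply: eq_bigr => r _.
by rewrite !mxE rmorphM /= conjCK mulrC.
Qed.

Lemma psd_rank1 n (Om' : 'cV[C]_n) : psd (Om' *m adjmx Om').
Proof. move=> v; rewrite -/(bil _ v v) bil_rank1; exact: mul_conjC_ge0. Qed.


Lemma trxi (p : R) : \tr (xi p) = 1.
Proof.
have [e00 _ _ e11] := xiE p.
rewrite /mxtrace sum_I2 e00 e11 !rCE !rCm; ring.
Qed.

Lemma aff_channel (p t : R) x : qubit_channel x -> 0 <= p -> p <= 1 -> 0 <= t ->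
  t <= p * (1 - p) -> t < 1 -> qubit_channel (affcomb t (Ep p) x).
Proof.
move=> hx p0 p1 t0 tpq t1; split; last split.
- move=> c A B; case: hx => Lx _.
  apply/matrixP => i j; rewrite /affcomb /Ep Lx mxtraceD mxtraceZ !mxE; ring.
- exact: aff_cp.
- move=> A; case: hx => _ [_ TPx].
  rewrite /affcomb mxtraceZ raddfB /= !mxtraceZ TPx trxi mulr1.
  have h : rC ((1 - t)^-1) * (1 - rC t) = 1.
    rewrite !rCE -(rmorph1 (real_complex R)) -rmorphB -rmorphM mulVf //.
    by rewrite subr_eq0 eq_sym lt_eqF.
  by rewrite -{1}(mul1r (\tr A)) -mulrBl mulrA h mul1r.
Qed.

Definition idc : 'M[C]_2 -> 'M[C]_2 := fun A => A.

Lemma ampl_id k (X : 'M[C]_(2 * k)) : ampl idc X = X.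
Proof.
apply/matrixP => r s; case: (mxtens_indexP r) => a i; case: (mxtens_indexP s) => b j.
by rewrite ampl_entry /idc /blk mxE.
Qed.

Lemma idc_channel : qubit_channel idc.
Proof.
split; last split; [by [] | | by []].
by move=> k X HX; rewrite ampl_id.
Qed.

Lemma upper (p t : R) : 0 <= t -> t < 1 ->
  qubit_channel (affcomb t (Ep p) idc) -> t <= p * (1 - p).
Proof.
move=> t0 t1 [_ [CP _]].
pose vt : 'cV[C]_(2 * 2) := rC (1 - p) *: emb 0 (e 0) + rC p *: emb 1 (e 1).
have H : 0 <= bil (ampl (affcomb t (Ep p) idc) (Om *m adjmx Om)) vt vt := CP 2 _ (psd_rank1 Om) vt.
rewrite ampl_aff bil_scal ampl_id in H.
have [e00 e01 e10 e11] := xiE p.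
rewrite bil_rank1 {1 2}/vt !bil_linl !bil_linr !bil_Ep_emb !ptr_bil !bil_rank1 in H.
rewrite /vt !ip_linl !ipO /= e00 e01 e10 e11 in H.
have e1 : rC (1 - p) * 1 + rC p * 1 = 1 by rewrite !mulr1 !rCE -rmorphD subrK rmorph1.
rewrite e1 !(mul0r, mulr0, mul1r, mulr1, addr0, add0r, rmorph1, rmorph0) in H.
have E : rC (1 - t)^-1 *
    (rC (1 - p) * (rC (1 - p) * rC p) + rC p * (rC p * rC (1 - p)) - rC t)
    = rC ((1 - t)^-1 * (p * (1 - p) - t)) by rewrite !rCE !rCm; ring.
rewrite E rC_ge0 pmulr_rge0 ?subr_ge0 // in H.
by rewrite invr_gt0 subr_gt0.
Qed.


Definition dd (p : R) : 'rV[C]_(2 * 2) :=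
  \row_r (if (@mxtens_unindex 2 2 r).1 == 0 then rC (p / 2) else rC ((1 - p) / 2)).

Lemma diag_entry p a i b j :
  diag_mx (dd p) (mxtens_index (a, i)) (mxtens_index (b, j)) =
  (if a == 0 then rC (p / 2) else rC ((1 - p) / 2)) *+ ((a == b) && (i == j)).
Proof.
by rewrite mxE (inj_eq (can_inj (@mxtens_indexK 2 2))) xpair_eqE mxE mxtens_indexK.
Qed.

Lemma choi_diag p : choi (Ep p) = diag_mx (dd p).
Proof.
apply/matrixP => r s; case: (mxtens_indexP r) => a i; case: (mxtens_indexP s) => b j.
rewrite diag_entry /choi summxE sum_I2 !summxE !sum_I2 !mxE !mxtens_indexK /Ep /mxtrace !sum_I2 !mxE.
have [e00 e01 e10 e11] := xiE p.
case: (ord2P a) => ->; case: (ord2P b) => ->; case: (ord2P i) => ->; case: (ord2P j) => ->;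
  rewrite /= ?mulr1n ?mulr0n !rCE !rCm; ring.
Qed.

Lemma tens_diag p : xi p *t (rC (1 / 2) *: (1%:M : 'M[C]_2)) = diag_mx (dd p).
Proof.
apply/matrixP => r s; case: (mxtens_indexP r) => a i; case: (mxtens_indexP s) => b j.
rewrite diag_entry tensmxE ?mxE /xi ?mxE.
case: (ord2P a) => ->; case: (ord2P b) => ->; case: (ord2P i) => ->; case: (ord2P j) => ->;
  rewrite /= ?mulr1n ?mulr0n !rCE !rCm; ring.
Qed.


End Aux.

Section B.
Local Open Scope complex_scope.
Local Open Scope ring_scope.
Variable R : realType.
Local Notation C := (R[i]).
Lemma eig_low (p : R) : eigenvalue (diag_mx (dd p)) (rC (p / 2)).
Proof.
apply/eigenvalueP; exists (delta_mx 0 (mxtens_index (0, 0)) : 'rV[C]_(2 * 2)).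
  apply/matrixP => i j; rewrite mul_mx_diag !mxE.
  case: (eqVneq j (mxtens_index (0, 0))) => [->|nj].
    by rewrite mxtens_indexK /= mulrC.
  by rewrite andbF mul0r mulr0.
apply/eqP => /matrixP/(_ 0 (mxtens_index (0, 0))); rewrite !mxE !eqxx /=.
by move/eqP; rewrite oner_eq0.
Qed.

Lemma eig_ge (p : R) l : p <= 1 / 2 -> eigenvalue (diag_mx (dd p)) l -> rC (p / 2) <= l.
Proof.
move=> hp /eigenvalueP [v hv nz].
have : [exists j, v 0 j != 0].
  apply: contraR nz => /existsPn H; apply/eqP/matrixP => i j.
  by rewrite (ord1 i) mxE; move: (H j); rewrite negbK => /eqP.
case/existsP => j vj.
move/matrixP/(_ 0 j): hv; rewrite mul_mx_diag !mxE mulrC => /(mulIf vj) <-.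
case: ((@mxtens_unindex 2 2 j).1 == 0); first by [].
rewrite !rCE lecR ler_pM2r ?invr_gt0 ?ltr0n //; lra.
Qed.

End B.
Unset Implicit Arguments.
Set Strict Implicit.

Theorem proposition5 (R : realType) (p : R) (hp0 : 0 < p) (hp1 : p < 1 / 2) :
  boundariness (@qubit_channel R) (Ep p) = p * (1 - p) /\
  choi (Ep p) = xi p *t (rC (1 / 2) *: (1%:M : 'M[R[i]]_2)) /\
  eigenvalue (choi (Ep p)) (rC (p / 2)) /\
  (forall l : R[i], eigenvalue (choi (Ep p)) l -> rC (p / 2) <= l) /\
  p / 2 < p * (1 - p).
Proof.
have p0 : 0 <= p by apply: ltW.
have p1 : p <= 1 by lra.
have pq0 : 0 <= p * (1 - p) by rewrite mulr_ge0 // subr_ge0.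
have pq1 : p * (1 - p) < 1.
  apply: (le_lt_trans (y := p)); last by lra.
  by rewrite ler_piMr // lerBlDr lerDl.
have pqT : forall x, qubit_channel x ->
    [set t : R | 0 <= t < 1 /\ qubit_channel (affcomb t (Ep p) x)]%classic (p * (1 - p)).
  move=> x hx; split; first by rewrite pq0 pq1.
  exact: aff_channel.
have ubT : forall x, has_ubound [set t : R | 0 <= t < 1 /\ qubit_channel (affcomb t (Ep p) x)]%classic.
  by move=> x; exists 1 => t [/andP [_ /ltW]].
have wge : forall x, qubit_channel x -> p * (1 - p) <= weight (@qubit_channel R) (Ep p) x.
  by move=> x hx; apply: (ub_le_sup (ubT x)); exact: pqT.
have wid : weight (@qubit_channel R) (Ep p) (@idc R) = p * (1 - p).
  apply/le_anti/andP; split; last exact: wge (@idc_channel R).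
  apply: ge_sup; first by exists (p * (1 - p)); exact: pqT (@idc_channel R).
  by move=> t [/andP [t0 t1] Ht]; exact: upper t0 t1 Ht.
have lbS : lbound [set weight (@qubit_channel R) (Ep p) x | x in @qubit_channel R]%classic (p * (1 - p)).
  by move=> w [x hx <-]; exact: wge.
split.
  rewrite /boundariness; apply/le_anti/andP; split.
    have := ge_inf (ex_intro _ _ lbS) (x := p * (1 - p)); apply.
    by exists (@idc R) => //; exact: (@idc_channel R).
  by apply: lb_le_inf => //; exists (p * (1 - p)), (@idc R) => //; exact: (@idc_channel R).
split; first by rewrite choi_diag tens_diag.
split; first by rewrite choi_diag; exact: eig_low.
split; first by move=> l; rewrite choi_diag; apply: eig_ge; lra.
rewrite -[X in X < _]mulr1 -mulrA ltr_pM2l //; lra.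
Qed.
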